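(* In the setting described in the context, suppose that the nearest neighbour recurrence coefficients satisfy \[ \max_{1\le i\le r}\sup_{\ell\ge0}|a_{\vec n_\ell,i}|<\infty \quad\text{and}\quad \max_{1\le i\le r}\sup_{\vec n\in\mathbb{N}_0^r}|b_{\vec n,i}|<\infty. \] Then the matrix $J$ associated with the path $(\vec n_\ell)$ satisfies $\sup_{|i-j|\le R}|J_{i,j}|<\infty$ for every $R\ge0$.
   Context: Let $r\ge1$ and let $\mu_1,\dots,\mu_r$ be positive Borel measures on $\mathbb{R}$ with all moments finite, forming a perfect system: for every $\vec n\in\mathbb{N}_0^r$ there is a monic polynomial $P_{\vec n}$ of degree $|\vec n|=n_1+\dots+n_r$ with $\int x^kP_{\vec n}\,d\mu_j=0$ for $0\le k\le n_j-1$, $1\le j\le r$. These satisfy the nearest neighbour recurrence relations $xP_{\vec n}(x)=P_{\vec n+\vec e_k}(x)+b_{\vec n,k}P_{\vec n}(x)+\sum_{j=1}^ra_{\vec n,j}P_{\vec n-\vec e_j}(x)$, $1\le k\le r$, with real coefficients $a_{\vec n,j},b_{\vec n,k}$ ($\vec e_j$ the $j$-th unit vector). Fix a path $(\vec n_\ell)_{\ell\ge0}$ with $|\vec n_\ell|=\ell$ and $\vec n_{\ell+1}=\vec n_\ell+\vec e_{i_\ell}$, $i_\ell\in\{1,\dots,r\}$, and set $p_\ell=P_{\vec n_\ell}$. The matrix $J=[J_{\ell,k}]_{\ell,k\ge0}$ is defined by $xp_\ell=\sum_{k=0}^{\ell+1}J_{\ell,k}p_k$, with $J_{\ell,k}=0$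 for $k>\ell+1$. *)

(* Defs.v *)
From HB Require Import structures.
From mathcomp Require Import all_boot all_order all_algebra.
From mathcomp Require Import all_classical all_reals all_analysis.
Set Implicit Arguments. Unset Strict Implicit. Unset Printing Implicit Defensive.
Import Order.TTheory GRing.Theory Num.Theory.
Local Open Scope ring_scope.

Definition mindex (r : nat) := {ffun 'I_r -> nat}.

Definition mabs (r : nat) (n : mindex r) : nat := (\sum_(i < r) n i)%N.

(* n + e_k and n - e_k (the latter only used when n k > 0) *)
Definition maddE (r : nat) (n : mindex r) (k : 'I_r) : mindex r :=
  [ffun i => (n i + (i == k))%N].
Definition msubE (r : nat) (n : mindex r) (k : 'I_r) : mindex r :=
  [ffun i => (n i - (i == k))%N].

Definition orthII (R : realType) (r : nat)
  (mu : 'I_r -> {measure set R -> \bar R}) (n : mindex r) (Q : {poly R}) : Prop :=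
  forall (j : 'I_r) (k : nat), (k < n j)%N ->
    (\int[mu j]_x ((x ^+ k * Q.[x])%:E) = 0)%E.

Definition finite_moments (R : realType) (r : nat)
  (mu : 'I_r -> {measure set R -> \bar R}) : Prop :=
  forall (j : 'I_r) (k : nat), (mu j).-integrable setT (fun x : R => (x ^+ k)%:E).

Definition perfect (R : realType) (r : nat)
  (mu : 'I_r -> {measure set R -> \bar R}) : Prop :=
  forall (n : mindex r) (Q : {poly R}), Q != 0 ->
    (size Q <= (mabs n).+1)%N -> orthII mu n Q -> size Q = (mabs n).+1.

Definition is_MOP (R : realType) (r : nat)
  (mu : 'I_r -> {measure set R -> \bar R}) (P : mindex r -> {poly R}) : Prop :=
  forall n : mindex r,
    P n \is monic /\ size (P n) = (mabs n).+1 /\ orthII mu n (P n).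

Definition NNRR (R : realType) (r : nat) (P : mindex r -> {poly R})
  (a b : mindex r -> 'I_r -> R) : Prop :=
  forall (n : mindex r) (k : 'I_r),
    'X * P n = P (maddE n k) + b n k *: P n
               + \sum_(j < r | (0 < n j)%N) a n j *: P (msubE n j).

Definition is_path (r : nat) (np : nat -> mindex r) : Prop :=
  np 0%N = [ffun => 0%N] /\ forall l : nat, exists i : 'I_r, np l.+1 = maddE (np l) i.

Definition is_J (R : realType) (p : nat -> {poly R}) (J : nat -> nat -> R) : Prop :=
  (forall l : nat, 'X * p l = \sum_(k < l.+2) J l k *: p k) /\
  (forall l k : nat, (l.+1 < k)%N -> J l k = 0).

(* Main.v *)
Require Import Defs.
From HB Require Import structures.
From mathcomp Require Import all_boot all_order all_algebra.
From mathcomp Require Import all_classical all_reals all_analysis.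
From mathcomp Require Import zify ring lra.
Import Order.TTheory GRing.Theory Num.Theory.
Local Open Scope ring_scope.

Lemma mabs_addE r (n : mindex r) i : mabs (maddE n i) = (mabs n).+1.
Proof.
rewrite /mabs.
under eq_bigr do rewrite ffunE.
rewrite big_split /=.
have -> : (\sum_(x < r) (x == i : nat))%N = 1%N.
  rewrite (bigD1 i) //= eqxx big1 //.
  by move=> x /negbTE ->.
by rewrite addn1.
Qed.

Lemma msub_add_same r (n : mindex r) j : msubE (maddE n j) j = n.
Proof. by apply/ffunP => x; rewrite !ffunE addnK. Qed.

Lemma add_sub r (n : mindex r) j : (0 < n j)%N -> maddE (msubE n j) j = n.
Proof.
move=> h; apply/ffunP => x; rewrite !ffunE.
case: eqP => [->|_] /=; first by rewrite subnK.
by rewrite subn0 addn0.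
Qed.

Lemma sub_add_comm r (n : mindex r) i j : i != j ->
  msubE (maddE n i) j = maddE (msubE n j) i.
Proof.
move=> nij; apply/ffunP => x; rewrite !ffunE.
case: (eqVneq x i) => [->|_]; first by rewrite (negbTE nij); lia.
by rewrite !addn0.
Qed.

Lemma nnrr_diff (R : realType) r (P : mindex r -> {poly R}) a b :
  NNRR P a b -> forall c i j,
  P (maddE c i) = P (maddE c j) + (b c j - b c i) *: P c.
Proof.
move=> H c i j.
have E := etrans (esym (H c i)) (H c j).
have E' : P (maddE c i) + b c i *: P c = P (maddE c j) + b c j *: P c.
  by apply: (addIr (\sum_(j0 < r | (0 < c j0)%N) a c j0 *: P (msubE c j0))).
apply: (addIr (b c i *: P c)); rewrite E' scalerBl.
by rewrite -addrA subrK.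
Qed.

Lemma sum_delta (R : realType) (V : lmodType R) N m (Hm : (m < N)%N) (x : R)
  (f : nat -> V) :
  \sum_(k < N) ((((k : nat) == m)%:R * x) *: f k) = x *: f m.
Proof.
rewrite (bigD1 (Ordinal Hm)) //= eqxx mul1r big1 ?addr0 // => k hk.
have -> : ((k : nat) == m) = false.
  apply/negbTE; apply: contra hk => /eqP e; apply/eqP/val_inj => /=; exact: e.
by rewrite mul0r scale0r.
Qed.

Lemma uniq_exp (R : realType) (p : nat -> {poly R}) :
  (forall k, size (p k) = k.+1 /\ (p k)`_k = 1) ->
  forall N (e : nat -> R), \sum_(k < N) e k *: p k = 0 ->
  forall k, (k < N)%N -> e k = 0.
Proof.
move=> hp; elim=> [|N IH] e H k hk; first by [].
move: H; rewrite big_ord_recr /= => H.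
have eN : e N = 0.
  move: (congr1 (fun q : {poly R} => q`_N) H) => /=.
  rewrite coef0 coefD coefZ coef_sum big1 ?add0r.
    by rewrite (proj2 (hp N)) mulr1.
  move=> i _; rewrite coefZ nth_default ?mulr0 //.
  by rewrite (proj1 (hp i)).
move: H; rewrite eN scale0r addr0 => H.
case: (ltnP k N) => hkN; first exact: IH H k hkN.
by have -> : k = N by lia.
Qed.


Theorem proposition4 (R : realType) (r : nat) (hr : (0 < r)%N)
  (mu : 'I_r -> {measure set R -> \bar R})
  (P : mindex r -> {poly R}) (a b : mindex r -> 'I_r -> R)
  (np : nat -> mindex r) (J : nat -> nat -> R) :
  finite_moments mu -> perfect mu -> is_MOP mu P -> NNRR P a b ->
  is_path np -> is_J (fun l => P (np l)) J ->
  (exists A : R, forall (l : nat) (i : 'I_r), (0 < np l i)%N -> `|a (np l) i| <= A) ->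
  (exists B : R, forall (n : mindex r) (i : 'I_r), `|b n i| <= B) ->
  forall Rd : nat, exists C : R, forall i j : nat,
    (i <= j + Rd)%N -> (j <= i + Rd)%N -> `|J i j| <= C.
Proof.
move=> _ _ hMOP hNN [hp0 hpS] [hJ hJ0] [A hA] [B hB] Rd.
set p := fun l => P (np l).
have habs : forall l, mabs (np l) = l.
  elim=> [|l IH]; first by rewrite hp0 /mabs big1 // => i _; rewrite ffunE.
  by have [i ->] := hpS l; rewrite mabs_addE IH.
have hpk : forall k, size (p k) = k.+1 /\ (p k)`_k = 1.
  move=> k; have [hm [hs _]] := hMOP (np k); rewrite /p hs habs; split=> //.
  by move/monicP: hm; rewrite lead_coefE hs habs.
set M : R := 1 + `|B| + `|B|.
have M1 : 1 <= M by rewrite /M -addrA lerDl addr_ge0.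
have M0 : 0 <= M by apply: le_trans M1.
have hBn : forall n i, `|b n i| <= `|B| by move=> n i; apply: le_trans (hB n i) (ler_norm _).
have HQ : forall l (j : 'I_r), (0 < np l j)%N -> exists g : nat -> R,
    P (msubE (np l) j) = \sum_(k < l) g k *: p k /\
    forall k, (k < l)%N -> `|g k| <= M ^+ (l.-1 - k).
  elim=> [|l IH] j hj.
    by move: hj; rewrite hp0 ffunE.
  have [i Hi] := hpS l.
  case: (eqVneq i j) => [eij|nij].
    rewrite Hi -eij msub_add_same.
    exists (fun k => ((k == l)%:R)); split.
      rewrite big_ord_recr /= eqxx scale1r big1 ?add0r // => k _.
      by rewrite ltn_eqF // scale0r.
    move=> k hk /=; case: eqP => [->|_]; first by rewrite subnn expr0 normr1.
    by rewrite normr0 exprn_ge0.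
  have hj' : (0 < np l j)%N by move: hj; rewrite Hi ffunE eq_sym (negbTE nij) addn0.
  have [g [Hg Hgb]] := IH j hj'.
  set c := msubE (np l) j.
  rewrite Hi sub_add_comm // (@nnrr_diff _ _ _ _ _ hNN c i j) add_sub // -/c Hg.
  exists (fun k => if k == l then 1 else (b c j - b c i) * g k); split.
    rewrite big_ord_recr /= eqxx scale1r addrC; congr (_ + _).
    rewrite scaler_sumr; apply: eq_bigr => k _.
    by rewrite ltn_eqF // scalerA.
  move=> k hk /=; case: eqP => [->|hkl]; first by rewrite subnn expr0 normr1.
  have hkl' : (k < l)%N by lia.
  rewrite normrM.
  have -> : (l - k = (l.-1 - k).+1)%N by lia.
  rewrite exprS; apply: ler_pM => //.
  apply: le_trans (ler_normB _ _) _.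
  - have := hBn c j; have := hBn c i; rewrite /M; lra.
  - exact: Hgb.
set C : R := 1 + `|B| + r%:R * `|A| * M ^+ Rd.
have C0 : 0 <= `|B| + r%:R * `|A| * M ^+ Rd.
  by rewrite addr_ge0 // mulr_ge0 // ?mulr_ge0 // exprn_ge0.
exists C => l k hlk hkl.
case: (ltnP l.+1 k) => Hk.
  rewrite hJ0 // normr0 /C; lra.
have hex : forall j : 'I_r, exists g : nat -> R,
   (0 < np l j)%N -> P (msubE (np l) j) = \sum_(k < l) g k *: p k /\
    forall k, (k < l)%N -> `|g k| <= M ^+ (l.-1 - k).
  move=> j; case: (ltnP 0 (np l j)) => h.
    by have [g ?] := HQ l j h; exists g.
  by exists (fun _ => 0) => h'; exfalso; lia.
have [G HG] := choice hex.
have [i Hi] := hpS l.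
set c := fun k : nat => ((k == l.+1)%:R * 1 + (k == l)%:R * b (np l) i +
   (k < l)%:R * \sum_(j < r | (0 < np l j)%N) a (np l) j * G j k).
have Hsum : \sum_(k < l.+2) c k *: p k = 'X * p l.
  rewrite /p (hNN (np l) i) -Hi -/(p l.+1) -/(p l).
  rewrite /c; under eq_bigr do rewrite !scalerDl.
  rewrite !big_split /=.
  have := @sum_delta R _ l.+2 l.+1 (ltnSn _) 1 p; rewrite /p => ->.
  have := @sum_delta R _ l.+2 l (leqW (ltnSn _)) (b (np l) i) p; rewrite /p => ->.
  rewrite scale1r; congr (_ + _).
  rewrite big_ord_recr big_ord_recr /= ltnn ltnNge leqnSn /= !mul0r !scale0r !addr0.
  under eq_bigr => k0 _ do rewrite ltn_ord mul1r scaler_suml.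
  rewrite exchange_big /=; apply: eq_bigr => j hj.
  rewrite (proj1 (HG j hj)) scaler_sumr; apply: eq_bigr => k0 _.
  by rewrite scalerA.
have HJc : forall k, (k < l.+2)%N -> J l k = c k.
  move=> k' hk'; apply/eqP; rewrite -subr_eq0; apply/eqP.
  apply: (@uniq_exp R p hpk l.+2 (fun k => J l k - c k)) => //.
  under eq_bigr do rewrite scalerBl.
  by rewrite sumrB Hsum -hJ subrr.
rewrite HJc //; rewrite /c /C.
case: (ltngtP k l) => hkl'.
- rewrite (_ : (k == l.+1) = false); last lia.
  rewrite (_ : false%:R = 0 :> R) // (_ : true%:R = 1 :> R) // !mul0r !add0r mul1r.
  apply: le_trans (ler_norm_sum _ _ _) _.
  apply: le_trans (_ : _ <= r%:R * `|A| * M ^+ Rd) _; last first.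
    have hB0 : 0 <= `|B| by []. lra.
  rewrite big_mkcond /=.
  apply: le_trans (_ : _ <= \sum_(j < r) `|A| * M ^+ Rd) _.
    apply: ler_sum => j _; case: ifP => hj; last by rewrite mulr_ge0 // exprn_ge0.
    rewrite normrM; apply: ler_pM => //.
      exact: le_trans (hA l j hj) (ler_norm _).
    apply: le_trans (proj2 (HG j hj) k hkl') _.
    apply: ler_weXn2l => //; lia.
  by rewrite sumr_const card_ord -mulrA mulr_natl.
- have ek : k = l.+1 by lia.
  subst k; rewrite eqxx.
  rewrite (_ : false%:R = 0 :> R) // (_ : true%:R = 1 :> R) // !mul0r !addr0 mul1r normr1; lra.
- rewrite (_ : (k == l.+1) = false); last lia.
  rewrite (_ : false%:R = 0 :> R) // (_ : true%:R = 1 :> R) // !mul0r !addr0 add0r mul1r.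
  have hX : 0 <= r%:R * `|A| * M ^+ Rd by rewrite mulr_ge0 // ?mulr_ge0 // exprn_ge0.
  have := hBn (np l) i; lra.
Qed.
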